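(* Let $R$ be a ring and $a\in R$. Then $a$ is feckly clean if and only if there exists $e\in R$ such that $$W(a-1)\subseteq W(e)\subseteq J\text{-spec}(R)\setminus W(a)\quad\text{and}\quad eR(1-e)\subseteq J(R).$$
   Context: Rings are associative with identity, not necessarily commutative; $J(R)$ is the Jacobson radical. An element $u\in R$ is full if $RuR=R$. An element $a\in R$ is feckly clean if there exist $e\in R$ and a full element $u\in R$ with $a=e+u$ and $eR(1-e)\subseteq J(R)$. $J\text{-spec}(R)$ is the set of all prime (two-sided) ideals $P$ of $R$ with $J(R)\subseteq P$. For an ideal $I$, $W(I)=\{P\in J\text{-spec}(R): I\subseteq P\}$, and for $a\in R$, $W(a)=W(RaR)$. *)

(* Defs.v *)
(* Rings: pzRingType (associative, with identity, possibly
   noncommutative; the zero ring is allowed). Subsets of R are predicates R -> Prop. *)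
From HB Require Import structures.
From mathcomp Require Import all_boot all_order all_algebra.
Set Implicit Arguments. Unset Strict Implicit. Unset Printing Implicit Defensive.
Import GRing.Theory.
Local Open Scope ring_scope.

Section Defs.
Variable R : pzRingType.

Definition left_ideal (L : R -> Prop) : Prop :=
  L 0 /\ (forall x y, L x -> L y -> L (x + y)) /\ (forall x, L x -> L (- x)) /\
  (forall r x, L x -> L (r * x)).

Definition ideal (I : R -> Prop) : Prop :=
  left_ideal I /\ (forall x r, I x -> I (x * r)).

Definition maximal_left_ideal (L : R -> Prop) : Prop :=
  left_ideal L /\ ~ L 1 /\
  (forall L', left_ideal L' -> (forall x, L x -> L' x) -> ~ L' 1 ->
     forall x, L' x -> L x).

Definition jacobson (x : R) : Prop :=
  forall L, maximal_left_ideal L -> L x.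

Definition prime_ideal (P : R -> Prop) : Prop :=
  ideal P /\ ~ P 1 /\
  (forall A B, ideal A -> ideal B ->
     (forall a b, A a -> B b -> P (a * b)) ->
     (forall a, A a -> P a) \/ (forall b, B b -> P b)).

Definition Jspec (P : R -> Prop) : Prop :=
  prime_ideal P /\ (forall x, jacobson x -> P x).

Definition RaR (a : R) (x : R) : Prop :=
  exists s : seq (R * R), x = \sum_(p <- s) (p.1 * a * p.2).

Definition W_ideal (I : R -> Prop) (P : R -> Prop) : Prop :=
  Jspec P /\ (forall x, I x -> P x).
Definition W (a : R) (P : R -> Prop) : Prop := W_ideal (RaR a) P.

Definition full (u : R) : Prop := forall x, RaR u x.

Definition ecorner_in_J (e : R) : Prop :=
  forall r, jacobson (e * r * (1 - e)).

Definition feckly_clean (a : R) : Prop :=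
  exists e u, full u /\ a = e + u /\ ecorner_in_J e.

End Defs.

(* Main.v *)
Require Import Defs.
From HB Require Import structures.
From mathcomp Require Import all_boot all_order all_algebra.
From mathcomp Require Import boolp classical_sets.
Import GRing.Theory.
Local Open Scope ring_scope.

Section Helpers.
Variable R : pzRingType.

Lemma RaR_self (a : R) : RaR a a.
Proof. exists [:: (1, 1)]; by rewrite big_cons big_nil /= mul1r mulr1 addr0. Qed.

Lemma RaR_left_ideal (a : R) : left_ideal (RaR a).
Proof.
split; first by exists [::]; rewrite big_nil.
split; first by move=> x y [s ->] [t ->]; exists (s ++ t); rewrite big_cat.
split; first by move=> x [s ->]; exists (map (fun p => (- p.1, p.2)) s);
  rewrite big_map -sumrN; apply: eq_bigr => p _; rewrite /= !mulNr.
move=> r x [s ->]; exists (map (fun p => (r * p.1, p.2)) s).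
by rewrite big_map mulr_sumr; apply: eq_bigr => p _; rewrite /= !mulrA.
Qed.

Lemma ideal_RaR (P : R -> Prop) (a x : R) : ideal P -> P a -> RaR a x -> P x.
Proof.
move=> [[P0 [PD [PN PM]]] PMr] Pa [s ->].
elim: s => [|p s IH]; first by rewrite big_nil.
by rewrite big_cons; apply: PD => //; apply: PMr; apply: PM.
Qed.

Lemma full_one (u : R) : RaR u 1 -> full u.
Proof.
rewrite /full. move=> [s Hs] x; rewrite /RaR; exists (map (fun p => (x * p.1, p.2)) s).
rewrite big_map; transitivity (x * 1); first by rewrite mulr1.
by rewrite Hs mulr_sumr; apply: eq_bigr => p _; rewrite /= !mulrA.
Qed.

Lemma ideal_sub (P : R -> Prop) x y : ideal P -> P x -> P y -> P (x - y).
Proof. by move=> [[_ [PD [PN _]]] _] Px Py; apply: PD => //; apply: PN. Qed.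

Lemma ideal_add (P : R -> Prop) x y : ideal P -> P x -> P y -> P (x + y).
Proof. by move=> [[_ [PD _]] _] Px Py; apply: PD. Qed.

Lemma corner_prime (P : R -> Prop) (e : R) :
  Jspec P -> ecorner_in_J e -> P e \/ P (1 - e).
Proof.
move=> [[[[P0 [PD [PN PM]]] PMr] [P1 Pp]] PJ] He.
pose A := fun x : R => forall r, P (x * r * (1 - e)).
pose B := fun y : R => forall x, A x -> P (x * y).
have iA : ideal A.
  split; first split.
  - by move=> r; rewrite !mul0r.
  split; first by move=> x y Ax Ay r; rewrite mulrDl mulrDl; apply: PD.
  split; first by move=> x Ax r; rewrite !mulNr; apply: PN.
  by move=> r x Ax s; rewrite -!mulrA; apply: PM; rewrite !mulrA.
  by move=> x r Ax s; rewrite -(mulrA x); apply: Ax.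
have iB : ideal B.
  split; first split.
  - by move=> x _; rewrite mulr0.
  split; first by move=> x y Bx By z Az; rewrite mulrDr; apply: PD; auto.
  split; first by move=> x Bx z Az; rewrite mulrN; apply: PN; auto.
  move=> r x Bx z Az; rewrite mulrA; apply: Bx.
  by move=> s; rewrite -(mulrA z); apply: Az.
  by move=> x r Bx z Az; rewrite mulrA; apply: PMr; auto.
have Ae : A e by move=> r; apply: PJ; apply: He.
have B1e : B (1 - e) by move=> x Ax; rewrite -[x]mulr1; apply: Ax.
case: (Pp A B iA iB) => [a b Aa Bb|H|H]; first by apply: Bb.
- by left; apply: H.
- by right; apply: H.
Qed.


Lemma left_ideal_ext (X Y : R -> Prop) :
  (forall x, X x <-> Y x) -> left_ideal X -> left_ideal Y.
Proof.
move=> E [X0 [XD [XN XM]]]; split; first by apply/E.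
split; first by move=> x y /E Xx /E Xy; apply/E; apply: XD.
split; first by move=> x /E Xx; apply/E; apply: XN.
by move=> r x /E Xx; apply/E; apply: XM.
Qed.

Lemma exists_maximal (I0 : R -> Prop) :
  left_ideal I0 -> ~ I0 1 -> exists L, maximal_left_ideal L /\ (forall x, I0 x -> L x).
Proof.
move=> I0l I01.
pose P := fun X : R -> Prop => left_ideal (fun x => X x \/ I0 x) /\ ~ (X 1 \/ I0 1).
have [A [PA maxA]] : exists A, P A /\ forall B, proper A B -> ~ P B.
  apply: Zorn_bigcup => F FP Ftot.
  pose U := fun t => (exists2 X, F X & X t) \/ I0 t.
  pose good := fun Z : R -> Prop => left_ideal (fun x => Z x \/ I0 x) /\
     (forall t, Z t \/ I0 t -> U t).
  have g0 : good (fun _ => False).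
    split; first by apply: (@left_ideal_ext I0) => // x; split; [right|case].
    by move=> t [[]|]; right.
  have gX X : F X -> good X.
    move=> FX; split; first by case: (FP X FX).
    by move=> t [Xt|It]; [left; exists X|right].
  have one x : U x -> exists Z, good Z /\ (Z x \/ I0 x).
    case=> [[X FX Xx]|Ix]; first by exists X; split; [apply: gX|left].
    by exists (fun _ => False); split; [|right].
  have two x y : U x -> U y -> exists Z, good Z /\ (Z x \/ I0 x) /\ (Z y \/ I0 y).
    case=> [[X FX Xx]|Ix]; case=> [[Y FY Yy]|Iy].
    - case: (Ftot X Y FX FY) => [XY|YX].
      + by exists Y; split; [apply: gX|split; left; [apply: XY|]].
      + by exists X; split; [apply: gX|split; left; [|apply: YX]].
    - by exists X; split; [apply: gX|split; [left|right]].
    - by exists Y; split; [apply: gX|split; [right|left]].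
    - by exists (fun _ => False); split; [|split; right].
  have [I00 [I0D [I0N I0M]]] := I0l.
  split.
    split; first by right.
    split.
      move=> x y Ux Uy; have [Z [[[_ [ZD _]] ZU] [Zx Zy]]] := two x y Ux Uy.
      by apply: ZU; apply: ZD.
    split.
      move=> x Ux; have [Z [[[_ [_ [ZN _]]] ZU] Zx]] := one x Ux.
      by apply: ZU; apply: ZN.
    move=> r x Ux; have [Z [[[_ [_ [_ ZM]]] ZU] Zx]] := one x Ux.
    by apply: ZU; apply: ZM.
  case=> [[X FX X1]|I1] //.
  by case: (FP X FX) => _; apply; left.
exists (fun x => A x \/ I0 x); split; last by move=> x; right.
case: PA => Al A1; split => //; split => //.
move=> L' L'l AL' L'1 x L'x.
apply: contrapT => nAx.
apply: (maxA L'); last first.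
  split; last by case.
  by apply: (@left_ideal_ext L') => // t; split; [left|case=> // It; apply: AL'; right].
split; first by move=> t At; apply: AL'; left.
by move=> H; apply: nAx; left; apply: H.
Qed.

Lemma max_gen (L : R -> Prop) x : maximal_left_ideal L -> ~ L x ->
  exists l y, L l /\ 1 = l + y * x.
Proof.
move=> [[L0 [LD [LN LM]]] [L1 Lmax]] nLx.
pose K := fun z => exists l y, L l /\ z = l + y * x.
have Kl : left_ideal K.
  split; first by exists 0, 0; rewrite mul0r addr0.
  split.
    move=> a b [l1 [y1 [Ll1 ->]]] [l2 [y2 [Ll2 ->]]]; exists (l1 + l2), (y1 + y2).
    by split; [apply: LD|rewrite mulrDl addrACA].
  split.
    move=> a [l1 [y1 [Ll1 ->]]]; exists (- l1), (- y1).
    by split; [apply: LN|rewrite opprD mulNr].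
  move=> r a [l1 [y1 [Ll1 ->]]]; exists (r * l1), (r * y1).
  by split; [apply: LM|rewrite mulrDr mulrA].
apply: contrapT => nK1; apply: nLx; apply: (Lmax K Kl) => //.
- by move=> z Lz; exists z, 0; rewrite mul0r addr0.
- by exists 0, 1; rewrite mul1r add0r.
Qed.

Lemma primitive_Jspec (L : R -> Prop) : maximal_left_ideal L ->
  Jspec (fun x => forall r, L (x * r)).
Proof.
move=> Lm; have Lm' := Lm; move: Lm' => [[L0 [LD [LN LM]]] [L1 Lmax]].
split; first split.
- split; first split.
  + by move=> r; rewrite mul0r.
  split; first by move=> x y Hx Hy r; rewrite mulrDl; apply: LD.
  split; first by move=> x Hx r; rewrite mulNr; apply: LN.
  by move=> r x Hx s; rewrite -mulrA; apply: LM.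
  by move=> x r Hx s; rewrite -mulrA.
- split; first by move=> H; apply: L1; rewrite -(mulr1 1); apply: H.
  move=> A B [[A0 [AD [AN AM]]] AMr] iB AB.
  case: (pselect (forall b, B b -> forall r, L (b * r))) => [H|H]; first by right.
  left; move: H => /existsNP [b /not_implyP [Bb /existsNP [r' nL]]].
  move=> a Aa r.
  have [l [y [Ll E]]] := max_gen _ _ Lm nL.
  have -> : r = r * l + (r * y) * (b * r') by rewrite -mulrA -mulrDr -E mulr1.
  rewrite mulrDr; apply: LD; first by rewrite mulrA; apply: LM.
  by rewrite !mulrA -(mulrA a r y); apply: AB => //; apply: AMr.
move=> j Jj r.
case: (pselect (L r)) => Lr; first by apply: LM.
pose L' := fun y => L (y * r).
suff : maximal_left_ideal L' by move/Jj.
split.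
  split; first by rewrite /L' mul0r.
  split; first by move=> x y Hx Hy; rewrite /L' mulrDl; apply: LD.
  split; first by move=> x Hx; rewrite /L' mulNr; apply: LN.
  by move=> s x Hx; rewrite /L' -mulrA; apply: LM.
split; first by rewrite /L' mul1r.
move=> K Kl L'K K1 x Kx; rewrite /L'.
apply: contrapT => nxr.
have [l [y [Ll E]]] := max_gen _ _ Lm nxr.
apply: K1.
have Ka : K (1 - r * y * x).
  apply: L'K; rewrite /L' mulrBl mul1r.
  have -> : r - r * y * x * r = r * l by rewrite -!mulrA -{1}(mulr1 r) E mulrDr mulrA addrK.
  by apply: LM.
move: Kl => [_ [KD [KN KM]]].
have -> : (1 : R) = (1 - r * y * x) + (r * y) * x by rewrite subrK.
by apply: KD => //; apply: KM.
Qed.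

End Helpers.

Theorem lemma3p1 (R : pzRingType) (a : R) :
  feckly_clean a <->
  exists e : R,
    (forall P : R -> Prop, W (a - 1) P -> W e P) /\
    (forall P : R -> Prop, W e P -> Jspec P /\ ~ W a P) /\
    ecorner_in_J e.
Proof.
have Win (P : R -> Prop) x : Jspec P -> P x -> W x P.
  by move=> JP Px; split => // y; apply: ideal_RaR Px; case: JP => [[]].
have Wout (P : R -> Prop) x : W x P -> P x.
  by move=> [_ H]; apply: H; apply: RaR_self.
have fullout (P : R -> Prop) u : Jspec P -> full u -> ~ P u.
  move=> [[iP [P1 _]] _] fu Pu; apply: P1; exact: ideal_RaR Pu (fu 1).
split.
  move=> [e [u [fu [-> He]]]]; exists e; split; last split => //.
    move=> P WP; have JP := WP.1; have iP := JP.1.1.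
    have Pa1 := Wout _ _ WP.
    case: (corner_prime _ _ _ JP He) => [Pe|Pe]; first exact: Win.
    exfalso; apply: (fullout P u JP fu).
    have -> : u = (e + u - 1) + (1 - e) by rewrite addrA subrK addrC addKr.
    exact: ideal_add.
  move=> P WP; have JP := WP.1; have iP := JP.1.1; split => // Wa.
  apply: (fullout P u JP fu).
  have -> : u = (e + u) - e by rewrite addrC addKr.
  exact: ideal_sub (Wout _ _ Wa) (Wout _ _ WP).
move=> [e [H1 [H2 He]]]; exists e, (a - e); split; last split => //.
  2: by rewrite addrC subrK.
apply: contrapT => nf.
have n1 : ~ RaR (a - e) 1 by move=> H; apply: nf; apply: full_one.
have [L [Lm IL]] := exists_maximal _ _ (RaR_left_ideal _ (a - e)) n1.
have JP := primitive_Jspec _ _ Lm.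
set P := (fun x => forall r, L (x * r)) in JP.
have iP := JP.1.1; have P1 := JP.1.2.1.
have Pu : P (a - e).
  move=> r; apply: IL; exists [:: (1, r)]; by rewrite big_cons big_nil /= mul1r addr0.
case: (corner_prime _ _ _ JP He) => Pe.
  have [_ nWa] := H2 P (Win P e JP Pe); apply: nWa; apply: Win => //.
  have -> : a = (a - e) + e by rewrite subrK.
  exact: (@ideal_add _ P _ _ iP Pu Pe).
have Pa1 : P (a - 1).
  have -> : a - 1 = (a - e) - (1 - e) by rewrite opprB addrA subrK.
  exact: (@ideal_sub _ P _ _ iP Pu Pe).
have Pe' := Wout _ _ (H1 P (Win P _ JP Pa1)).
apply: P1; have -> : (1 : R) = e + (1 - e) by rewrite addrC subrK.
exact: (@ideal_add _ P _ _ iP Pe' Pe).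
Qed.
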